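(* Let $\alpha\in\mathbb R$ and let $\Sigma$ be a round sphere in $\mathbb R^3$ (with the origin removed if it lies on it). Then $\Sigma$ is $\alpha$-stationary if and only if either (1) $\alpha=-2$ and $\Sigma$ is centered at the origin, or (2) $\alpha=-4$ and $\Sigma$ contains the origin.
   Context: Let $\Sigma$ be a connected oriented surface immersed in $\mathbb R^3\setminus\{0\}$ with unit normal $\nu$ and mean curvature $H$ (sum of the principal curvatures, so a sphere of radius $r$ has $H=2/r$ for the inward normal). For $\alpha\in\mathbb R$, $\Sigma$ is called $\alpha$-stationary if $H(p)=\alpha\,\frac{\langle\nu(p),p\rangle}{|p|^2}$ for all $p\in\Sigma$. *)

(* Defs.v *)
From mathcomp Require Import all_boot all_order all_algebra.
From mathcomp Require Import reals.
Set Implicit Arguments. Unset Strict Implicit. Unset Printing Implicit Defensive.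
Import Order.TTheory GRing.Theory Num.Theory.
Local Open Scope ring_scope.

Definition dot3 {R : realType} (u v : 'rV[R]_3) : R := (u *m v^T) 0 0.

Definition on_sphere {R : realType} (c : 'rV[R]_3) (r : R) (p : 'rV[R]_3) : Prop :=
  dot3 (p - c) (p - c) = r ^+ 2.

(* Orientation of the sphere: s = 1 is the inward unit normal, s = -1 the
   outward one.  nu_s(p) = s (c - p)/r, and with the convention H = sum of
   principal curvatures, H_s = s * 2 / r (so H = 2/r for the inward normal). *)
Definition sphere_normal {R : realType} (s : R) (c : 'rV[R]_3) (r : R)
  (p : 'rV[R]_3) : 'rV[R]_3 := (s / r) *: (c - p).
Definition sphere_mean_curv {R : realType} (s r : R) : R := s * 2 / r.

Definition sphere_alpha_stationary {R : realType} (alpha s : R)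
  (c : 'rV[R]_3) (r : R) : Prop :=
  forall p : 'rV[R]_3, on_sphere c r p -> p != 0 ->
    sphere_mean_curv s r = alpha * dot3 (sphere_normal s c r p) p / dot3 p p.

(* Main.v *)
Require Import Defs.
From mathcomp Require Import all_boot all_order all_algebra.
From mathcomp Require Import reals.
From mathcomp Require Import ring lra.
Import Order.TTheory GRing.Theory Num.Theory.
Local Open Scope ring_scope.

Lemma dotE {R : realType} (u v : 'rV[R]_3) :
  dot3 u v = u 0 0 * v 0 0 + u 0 1 * v 0 1 + u 0 2 * v 0 2.
Proof. rewrite /dot3 !mxE !big_ord_recr big_ord0 /= !mxE add0r.
by congr (_ + _ + _); congr (u _ _ * v _ _); apply: val_inj. Qed.

Lemma dot_self_neq0 {R : realType} (p : 'rV[R]_3) : p != 0 -> dot3 p p != 0.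
Proof.
move=> hp; apply/negP => /eqP h; move/negP: hp; apply; apply/eqP.
rewrite dotE in h.
have h0 : p 0 0 = 0 by nra.
have h1 : p 0 1 = 0 by nra.
have h2 : p 0 2 = 0 by nra.
apply/rowP => i; rewrite mxE.
case: i => [[|[|[|k]]] Hk] //.
- by rewrite -h0; congr (p _ _); apply: val_inj.
- by rewrite -h1; congr (p _ _); apply: val_inj.
- by rewrite -h2; congr (p _ _); apply: val_inj.
Qed.

Lemma key {R : realType} (alpha : R) (c : 'rV[R]_3) (r s : R) :
  0 < r -> s != 0 -> sphere_alpha_stationary alpha s c r ->
  forall p, on_sphere c r p -> 2 * dot3 p p = alpha * dot3 (c - p) p.
Proof.
move=> hr hs H p hp.
have [->|pn0] := eqVneq p 0.
  by rewrite !dotE !mxE; ring.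
have := H p hp pn0.
rewrite /sphere_mean_curv.
have -> : dot3 (sphere_normal s c r p) p = (s / r) * dot3 (c - p) p.
  by rewrite /sphere_normal !dotE !mxE; ring.
have hD := @dot_self_neq0 _ p pn0.
have hr0 : r != 0 by rewrite gt_eqF.
move=> e.
have e2 : (s / r) * (2 * dot3 p p) = (s / r) * (alpha * dot3 (c - p) p).
  have -> : (s / r) * (2 * dot3 p p) = (s * 2 / r) * dot3 p p by ring.
  rewrite e; field; rewrite ?hD ?hr0 //.
apply: (mulfI _ e2).
by rewrite mulf_neq0 // invr_eq0.
Qed.

Theorem mainTheorem3 (R : realType) (alpha : R) (c : 'rV[R]_3) (r : R)
  (s : R) (hr : 0 < r) (hs : s = 1 \/ s = -1) :
  sphere_alpha_stationary alpha s c r <->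
  ((alpha = -2 /\ c = 0) \/ (alpha = -4 /\ dot3 c c = r ^+ 2)).
Proof.
have hs0 : s != 0 by case: hs => ->; rewrite ?oppr_eq0 oner_eq0.
have hr0 : r != 0 by rewrite gt_eqF.
split.
- move=> H.
  have K := @key _ alpha c r s hr hs0 H.
  have P i (t : R) : t = r \/ t = - r ->
      2 * dot3 (c + t *: 'e_i) (c + t *: 'e_i) =
      alpha * dot3 (c - (c + t *: 'e_i)) (c + t *: 'e_i).
    move=> ht; apply: K.
    rewrite /on_sphere !dotE.
    have -> : c + t *: 'e_i - c = t *: 'e_i by rewrite addrC addKr.
    rewrite !mxE.
    case: i => [[|[|[|k]]] Hk] //= ; case: ht => ->; ring.
  have E0p := P 0 r (or_introl erefl).
  have E0m := P 0 (- r) (or_intror erefl).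
  have E1p := P 1 r (or_introl erefl).
  have E1m := P 1 (- r) (or_intror erefl).
  have E2p := P 2 r (or_introl erefl).
  have E2m := P 2 (- r) (or_intror erefl).
  move: E0p E0m E1p E1m E2p E2m; rewrite !dotE !mxE /=.
  set a := c 0 0; set b := c 0 1; set d := c 0 2.
  move=> E0p E0m E1p E1m E2p E2m.
  have ha : r * ((4 + alpha) * a) = 0 by nra.
  have hb : r * ((4 + alpha) * b) = 0 by nra.
  have hd : r * ((4 + alpha) * d) = 0 by nra.
  move/eqP: ha; rewrite mulf_eq0 (negbTE hr0) /= mulf_eq0 => /orP [h4|/eqP ha].
    right; split; first by move/eqP: h4 => h4; lra.
    move/eqP: h4 => h4.
    move: E0p; have -> : alpha = -4 by lra.
    move=> E0p; nra.
  move/eqP: hb; rewrite mulf_eq0 (negbTE hr0) /= mulf_eq0 => /orP [h4|/eqP hb].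
    right; split; first by move/eqP: h4 => h4; lra.
    move/eqP: h4 => h4.
    move: E0p; have -> : alpha = -4 by lra.
    move=> E0p; nra.
  move/eqP: hd; rewrite mulf_eq0 (negbTE hr0) /= mulf_eq0 => /orP [h4|/eqP hd].
    right; split; first by move/eqP: h4 => h4; lra.
    move/eqP: h4 => h4.
    move: E0p; have -> : alpha = -4 by lra.
    move=> E0p; nra.
  left; split.
    move: E0p; rewrite ha hb hd => E0p.
    have : (2 + alpha) * (r * r) = 0 by nra.
    move/eqP; rewrite mulf_eq0 mulf_eq0 (negbTE hr0) /= orbF => /eqP; lra.
  apply/rowP => i; rewrite mxE.
  case: i => [[|[|[|k]]] Hk] //.
  + by rewrite -ha; congr (c _ _); apply: val_inj.
  + by rewrite -hb; congr (c _ _); apply: val_inj.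
  + by rewrite -hd; congr (c _ _); apply: val_inj.
- move=> Hc p hp pn0.
  have hD := @dot_self_neq0 _ p pn0.
  rewrite /sphere_mean_curv.
  have -> : dot3 (sphere_normal s c r p) p = (s / r) * dot3 (c - p) p.
    by rewrite /sphere_normal !dotE !mxE; ring.
  case: Hc => [[-> ->]|[-> hc]].
    have -> : dot3 (0 - p) p = - dot3 p p by rewrite !dotE !mxE; ring.
    by field; rewrite hD hr0.
  have hpp : dot3 p p = 2 * dot3 c p.
    move: hp hc; rewrite /on_sphere !dotE !mxE => hp hc; nra.
  have -> : dot3 (c - p) p = dot3 c p - dot3 p p by rewrite !dotE !mxE; ring.
  have hcp : dot3 c p != 0 by apply: contra hD; rewrite hpp => /eqP ->; rewrite mulr0.
  rewrite hpp; field.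
  by rewrite hcp hr0.
Qed.
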